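(* Let $(G,\mathcal{C})$ be CER with respect to the ordering $(V_{\eta_1},\dots,V_{\eta_r})$. If $\{v,w\},\{v',w'\}\in\tilde E$ satisfy $c(v,w)=c(v',w')=k\in[r+R]\setminus F$, $\pi(v)\le\pi(w)$ and $\pi(v')\le\pi(w')$, then $c(v)=c(v')$.
   Context: $G=(V,E)$ finite simple undirected graph, $V=[p]$; coloring: vertex color classes $V_1,\dots,V_r$, edge color classes $E_{r+1},\dots,E_{r+R}$ partitioning $E$. $\tilde E=E\cup\{\{v\}:v\in V\}$, $E_i=\{\{v\}:v\in V_i\}$; $c(v,w)=k$ iff $\{v,w\}\in E_k$, $c(v)=c(v,v)$. $\pi(v)=i$ iff $v\in V_{\eta_i}$; $V_{\le i}=V_{\eta_1}\cup\dots\cup V_{\eta_i}$. $m_{v\to w}(k,h)=|\{u\in V_{\le\min(\pi(v),\pi(w))}: c(v,u)=k, c(u,w)=h\}|$, $m_{v\leftrightarrow w}(k,h)=m_{v\to w}(k,h)+m_{v\to w}(h,k)$. $F_i=\{c(v,w):\{v,w\}\in\tilde E,\ c(v)=c(w)=i\}$, $F=\bigcup_iF_i$. The ordering is a cpeo if every $v\in V_{\eta_i}$ is simplicial (neighbours form a clique) in $G[V_{\eta_i}\cup\dots\cup V_{\eta_r}]$. CER with respect to the ordering: cpeo and (M1): $c(v,w)=c(v',w')$ implies $m_{v\leftrightarrow w}=m_{v'\leftrightarrow w'}$. *)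

(* Defs.v *)
From mathcomp Require Import all_boot all_fingroup.
Set Implicit Arguments. Unset Strict Implicit. Unset Printing Implicit Defensive.

(* A coloured simple graph on V = 'I_p with r vertex colours 1..r and
   R edge colours r+1..r+R.
   - E : adjacency relation (symmetric, irreflexive);
   - vcol v : 'I_r  -- vertex v lies in V_(vcol v + 1);
   - ecol v w : 'I_R -- the edge {v,w} lies in E_(r + 1 + ecol v w)
     (only meaningful when E v w; must be symmetric on edges).
   Colour classes of a partition are nonempty. *)
Definition colored_graph (p r R : nat) (E : rel 'I_p)
  (vcol : 'I_p -> 'I_r) (ecol : 'I_p -> 'I_p -> 'I_R) : Prop :=
  [/\ symmetric E, irreflexive E,
      (forall v w, E v w -> ecol v w = ecol w v),
      (forall i : 'I_r, exists v, vcol v = i) &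
      (forall j : 'I_R, exists v w, E v w /\ ecol v w = j)].

Definition in_Etilde p (E : rel 'I_p) (v w : 'I_p) : bool := (v == w) || E v w.

(* the colour c(v,w) in [r+R] of {v,w} in E~; 0 (not a colour) otherwise *)
Definition col p r R (E : rel 'I_p) (vcol : 'I_p -> 'I_r)
  (ecol : 'I_p -> 'I_p -> 'I_R) (v w : 'I_p) : nat :=
  if v == w then (vcol v).+1
  else if E v w then r + (ecol v w).+1 else 0.

(* eta : position i |-> colour eta i (the ordering (V_eta_1,...,V_eta_r));
   pi v = position of the colour class of v, i.e. pi v = i iff v in V_(eta i) *)
Definition pos p r (eta : {perm 'I_r}) (vcol : 'I_p -> 'I_r) (v : 'I_p) : 'I_r :=
  (eta^-1)%g (vcol v).

Definition mto (p r R : nat) (E : rel 'I_p) (vcol : 'I_p -> 'I_r) (ecol : 'I_p -> 'I_p -> 'I_R) (eta : {perm 'I_r}) (v w : 'I_p) (k h : nat) : nat :=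
  #|[set u : 'I_p | (pos eta vcol u <= minn (pos eta vcol v) (pos eta vcol w))
                    && (col E vcol ecol v u == k) && (col E vcol ecol u w == h)]|.

Definition mboth (p r R : nat) (E : rel 'I_p) (vcol : 'I_p -> 'I_r) (ecol : 'I_p -> 'I_p -> 'I_R) (eta : {perm 'I_r}) (v w : 'I_p) (k h : nat) : nat :=
  mto E vcol ecol eta v w k h + mto E vcol ecol eta v w h k.

Definition inF (p r R : nat) (E : rel 'I_p) (vcol : 'I_p -> 'I_r) (ecol : 'I_p -> 'I_p -> 'I_R) (k : nat) : Prop :=
  exists v w : 'I_p, [/\ in_Etilde E v w, vcol v = vcol w &
                          col E vcol ecol v w = k].

Definition cpeo p r (E : rel 'I_p) (vcol : 'I_p -> 'I_r) (eta : {perm 'I_r}) : Prop :=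
  forall v x y : 'I_p,
    pos eta vcol v <= pos eta vcol x -> pos eta vcol v <= pos eta vcol y ->
    E v x -> E v y -> x != y -> E x y.

Definition M1 (p r R : nat) (E : rel 'I_p) (vcol : 'I_p -> 'I_r) (ecol : 'I_p -> 'I_p -> 'I_R) (eta : {perm 'I_r}) : Prop :=
  forall v w v' w' : 'I_p, in_Etilde E v w -> in_Etilde E v' w' ->
    col E vcol ecol v w = col E vcol ecol v' w' ->
    forall k h, 1 <= k <= r + R -> 1 <= h <= r + R ->
      mboth E vcol ecol eta v w k h = mboth E vcol ecol eta v' w' k h.

Definition CER (p r R : nat) (E : rel 'I_p) (vcol : 'I_p -> 'I_r) (ecol : 'I_p -> 'I_p -> 'I_R) (eta : {perm 'I_r}) : Prop :=
  cpeo E vcol eta /\ M1 E vcol ecol eta.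

(* Main.v *)
Require Import Defs.
From mathcomp Require Import all_boot all_fingroup.
From mathcomp Require Import zify.

Theorem lemma7p7 (p r R : nat) (E : rel 'I_p) (vcol : 'I_p -> 'I_r)
  (ecol : 'I_p -> 'I_p -> 'I_R) (eta : {perm 'I_r}) :
  colored_graph E vcol ecol ->
  CER E vcol ecol eta ->
  forall (v w v' w' : 'I_p) (k : nat),
    in_Etilde E v w -> in_Etilde E v' w' ->
    col E vcol ecol v w = k -> col E vcol ecol v' w' = k ->
    1 <= k <= r + R -> ~ inF E vcol ecol k ->
    pos eta vcol v <= pos eta vcol w -> pos eta vcol v' <= pos eta vcol w' ->
    col E vcol ecol v v = col E vcol ecol v' v'.
Proof.
move=> _ [_ hM] v w v' w' k hvw hv'w' hk hk' krange notF hp hp'.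
have colvv : forall a, col E vcol ecol a a = (vcol a).+1 by move=> a; rewrite /col eqxx.
have key : forall a b x, col E vcol ecol a b = (vcol x).+1 -> a = b /\ vcol a = vcol x.
  move=> a b x; rewrite /col; case: eqP => [-> /succn_inj/val_inj -> //|_].
  case: (E a b) => // h; exfalso; have := ltn_ord (vcol x); lia.
have hneq : vcol v' != vcol w'.
  apply/eqP => h; apply: notF; exists v', w'; split => //.
have hlt : pos eta vcol v' < pos eta vcol w'.
  rewrite ltn_neqAle hp' andbT; apply: contra hneq => /eqP h; apply/eqP.
  by move: h => /val_inj; rewrite /pos => /perm_inj.
have h1 : 0 < mboth E vcol ecol eta v w (vcol v).+1 k.
  rewrite /mboth /mto; apply: ltn_addr; apply/card_gt0P; exists v.
  by rewrite inE leq_min leqnn hp colvv eqxx hk eqxx.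
have rng : 1 <= (vcol v).+1 <= r + R.
  by rewrite ltn0Sn /=; apply: leq_trans (ltn_ord _) (leq_addr _ _).
rewrite (hM v w v' w' hvw hv'w' (etrans hk (esym hk')) _ _ rng krange) in h1.
move: h1; rewrite /mboth /mto addn_gt0; case/orP => /card_gt0P [u];
  rewrite inE => /andP[/andP[hu h2] h3].
- have [_ e] := key _ _ _ (eqP h2); by rewrite !colvv e.
- have [eu _] := key _ _ _ (eqP h3); subst u.
  move: hu; rewrite leq_min => /andP[hh _].
  by have := leq_trans hlt hh; rewrite ltnn.
Qed.
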